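(* Let $m_0,\widetilde m_0,\widetilde m_1,\dots,\widetilde m_6$ be complex-valued functions on $\mathbb R^2$, $2\pi$-periodic in each variable. Suppose that for every $\boldsymbol\omega\in S_0$ the matrix $\widetilde{\mathbf M}[:,\widehat0](\boldsymbol\omega)$ has full rank $6$ and $\sum_{i\in\{0,2,4,6\}}m_0(\boldsymbol\omega)\overline{\widetilde m_0(\boldsymbol\omega+\boldsymbol\pi_i)}=1$. Then the vector $\mathbf b_0'(\boldsymbol\omega)$ lies in the column space of $\widetilde{\mathbf M}[:,\widehat0](\boldsymbol\omega)$ for every $\boldsymbol\omega\in S_0$ if and only if, for every $\boldsymbol\omega\in S_0$, $\operatorname{rank}\widetilde{\mathbf M}[\mathrm{odd},\widehat0](\boldsymbol\omega)=\operatorname{rank}\widetilde{\mathbf M}[\mathrm{even},\widehat0](\boldsymbol\omega)=3$ and $[m_0(\boldsymbol\omega),m_0(\boldsymbol\omega+\boldsymbol\pi_2),m_0(\boldsymbol\omega+\boldsymbol\pi_4),m_0(\boldsymbol\omega+\boldsymbol\pi_6)]\,\widetilde{\mathbf M}[\mathrm{even},\widehat0](\boldsymbol\omega)=\mathbf 0$, $[m_0(\boldsymbol\omega+\boldsymbol\pi_1),m_0(\boldsymbol\omega+\boldsymbol\pi_3),m_0(\boldsymbol\omega+\boldsymbol\pi_5),m_0(\boldsymbol\omega+\boldsymbol\pi_7)]\,\widetilde{\mathbf M}[\mathrm{odd},\widehat0](\boldsymbol\omega)=\mathbf 0$.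
   Context: $S_0=[-\pi,\pi)^2$. Shifts: $\boldsymbol\pi_0=(0,0)$, $\boldsymbol\pi_1=(\pi/2,\pi/2)$, $\boldsymbol\pi_2=(\pi,0)$, $\boldsymbol\pi_3=(-\pi/2,\pi/2)$, $\boldsymbol\pi_4=(0,\pi)$, $\boldsymbol\pi_5=(\pi/2,-\pi/2)$, $\boldsymbol\pi_6=(\pi,\pi)$, $\boldsymbol\pi_7=(-\pi/2,-\pi/2)$. $\widetilde{\mathbf M}(\boldsymbol\omega)\in\mathbb C^{8\times7}$ has rows $i=0,\dots,7$, columns $j=0,\dots,6$, $(i,j)$ entry $\overline{\widetilde m_j(\boldsymbol\omega+\boldsymbol\pi_i)}$, except that entries with $j=0$ and $i$ odd are $0$. $\widetilde{\mathbf M}[:,0](\boldsymbol\omega)$ is its column of index $0$; $\widetilde{\mathbf M}[:,\widehat0](\boldsymbol\omega)\in\mathbb C^{8\times6}$ is obtained by deleting that column; $\widetilde{\mathbf M}[\mathrm{even},\widehat0](\boldsymbol\omega)$ and $\widetilde{\mathbf M}[\mathrm{odd},\widehat0](\boldsymbol\omega)\in\mathbb C^{4\times6}$ consist of the rows of $\widetilde{\mathbf M}[:,\widehat0](\boldsymbol\omega)$ with indices $0,2,4,6$ and $1,3,5,7$ respectively (in this order). $\mathbf b_0=(1,0,\dots,0)^\top\in\mathbb R^8$ and $\mathbf b_0'(\boldsymbol\omega)=\mathbf b_0-m_0(\boldsymbol\omega)\,\widetilde{\mathbf M}[:,0](\boldsymbol\omega)$. *)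

(* Defs.v *)
From HB Require Import structures.
From mathcomp Require Import all_boot all_order all_algebra.
From mathcomp Require Import reals trigo.
From mathcomp Require Import complex.
Set Implicit Arguments. Unset Strict Implicit. Unset Printing Implicit Defensive.
Import Order.TTheory GRing.Theory Num.Theory.
Local Open Scope ring_scope.
Local Open Scope complex_scope.

Definition evi (k : 'I_4) : 'I_8 := inord (2 * val k).
Definition odi (k : 'I_4) : 'I_8 := inord (2 * val k + 1).

Section Defs.
Variable R : realType.
Notation C := (complex R).
Notation pt := (R * R)%type.

Definition padd (w s : pt) : pt := (w.1 + s.1, w.2 + s.2).

Definition shift (i : 'I_8) : pt :=
  match val i with
  | 0 => (0, 0)
  | 1 => (pi / 2, pi / 2)
  | 2 => (pi, 0)
  | 3 => (- (pi / 2), pi / 2)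
  | 4 => (0, pi)
  | 5 => (pi / 2, - (pi / 2))
  | 6 => (pi, pi)
  | _ => (- (pi / 2), - (pi / 2))
  end.

Definition periodic2 (f : pt -> C) : Prop :=
  forall x y : R, f (x + 2 * pi, y) = f (x, y) /\ f (x, y + 2 * pi) = f (x, y).

Definition inS0 (w : pt) : Prop :=
  (- pi <= w.1 < pi) /\ (- pi <= w.2 < pi).

Definition Mt (mt : 'I_7 -> pt -> C) (w : pt) : 'M[C]_(8, 7) :=
  \matrix_(i < 8, j < 7)
    (if (val j == 0%N) && odd (val i) then 0 else (mt j (padd w (shift i)))^*).

Definition Mhat0 (mt : 'I_7 -> pt -> C) (w : pt) : 'M[C]_(8, 6) :=
  \matrix_(i < 8, j < 6) Mt mt w i (lift ord0 j).


Definition Meven (mt : 'I_7 -> pt -> C) (w : pt) : 'M[C]_(4, 6) :=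
  \matrix_(k < 4, j < 6) Mhat0 mt w (evi k) j.
Definition Modd (mt : 'I_7 -> pt -> C) (w : pt) : 'M[C]_(4, 6) :=
  \matrix_(k < 4, j < 6) Mhat0 mt w (odi k) j.

Definition b0 : 'cV[C]_8 := \col_(i < 8) (if val i == 0%N then 1 else 0).
Definition b0' (m0 : pt -> C) (mt : 'I_7 -> pt -> C) (w : pt) : 'cV[C]_8 :=
  b0 - m0 w *: col ord0 (Mt mt w).

Definition m0even (m0 : pt -> C) (w : pt) : 'rV[C]_4 :=
  \row_(k < 4) m0 (padd w (shift (evi k))).
Definition m0odd (m0 : pt -> C) (w : pt) : 'rV[C]_4 :=
  \row_(k < 4) m0 (padd w (shift (odi k))).

End Defs.

(* Main.v *)
Require Import Defs.
From HB Require Import structures.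
From mathcomp Require Import all_boot all_order all_algebra.
From mathcomp Require Import reals trigo.
From mathcomp Require Import complex.
From mathcomp Require Import ring lra zify.
Set Implicit Arguments. Unset Strict Implicit. Unset Printing Implicit Defensive.
Import Order.TTheory GRing.Theory Num.Theory.
Local Open Scope ring_scope.
Local Open Scope complex_scope.
Ltac c8 i := case: i => [[|[|[|[|[|[|[|[|//]]]]]]]] ?].
Ltac c4 i := case: i => [[|[|[|[|//]]]] ?].
Ltac c3 i := case: i => [[|[|[|//]]] ?].

Definition r1 (i : 'I_8) : int := match val i with 0 => 0 | 1 => 1 | 2 => 2 | 3 => -1 | 4 => 0 | 5 => 1 | 6 => 2 | _ => -1 end.
Definition r2 (i : 'I_8) : int := match val i with 0=>0|1=>1|2=>0|3=>1|4=>2|5=>-1|6=>2|_=>-1 end.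
Definition q1 (i : nat) := (i %% 4)%N.
Definition q2 (i : nat) := (i %% 2 + 2 * (i %/ 4))%N.
Definition addn8 (s i : nat) : nat :=
  let a := ((q1 s + q1 i) %% 4)%N in let b := ((q2 s + q2 i) %% 4)%N in
  (a + 4 * (((b - a %% 2) %/ 2) %% 2))%N.
Lemma addn8_lt s i : (addn8 s i < 8)%N.
Proof.
rewrite /addn8; set a := (_ %% 4)%N; set b := (_ %% 2)%N.
have ha : (a < 4)%N by rewrite ltn_mod.
have hb : (b < 2)%N by rewrite ltn_mod.
have -> : 8%N = (4 + 4 * 1)%N by [].
by apply: leq_trans (_ : a.+1 + 4 * b <= _)%N; [|rewrite leq_add // leq_mul2l; case: b hb => [|[]]].
Qed.
Definition add8 (s i : 'I_8) : 'I_8 := Ordinal (addn8_lt s i).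
Lemma evi_lt (k : 'I_4) : (2 * k < 8)%N. Proof. by case: k => [[|[|[|[|]]]]]. Qed.
Lemma odi_lt (k : 'I_4) : (2 * k + 1 < 8)%N. Proof. by case: k => [[|[|[|[|]]]]]. Qed.
Definition evi' k : 'I_8 := Ordinal (evi_lt k).
Definition odi' k : 'I_8 := Ordinal (odi_lt k).
Lemma eviE k : evi k = evi' k. Proof. by apply/val_inj; rewrite /= inordK // evi_lt. Qed.
Lemma odiE k : odi k = odi' k. Proof. by apply/val_inj; rewrite /= inordK // odi_lt. Qed.


Lemma B1 s i : r1 s + r1 i - r1 (add8 s i) \in [:: -4; 0; 4].
Proof. c8 s; c8 i; vm_compute; reflexivity. Qed.
Lemma B1' s i : r2 s + r2 i - r2 (add8 s i) \in [:: -4; 0; 4].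
Proof. c8 s; c8 i; vm_compute; reflexivity. Qed.
Lemma B2 s i : odd (add8 s i) = odd s (+) odd i.
Proof. c8 s; c8 i; vm_compute; reflexivity. Qed.
Lemma B3 s i : (add8 s i == s) = (i == ord0).
Proof. c8 s; c8 i; vm_compute; reflexivity. Qed.
Lemma B4 s r : exists i, add8 s i = r.
Proof. c8 s; c8 r; (unshelve eexists (@Ordinal 8 _ _); [do 8 (try (exact 0%N); try (exact 1%N); try (exact 2%N);try (exact 3%N);try (exact 4%N);try (exact 5%N);try (exact 6%N);try (exact 7%N))|..]). Abort.
Definition neg8 (s : 'I_8) : 'I_8 := match val s with
 | 1 => ord_max | 3 => Ordinal (isT : (5 < 8)%N) | 5 => Ordinal (isT : (3 < 8)%N)
 | 7 => Ordinal (isT : (1 < 8)%N) | _ => s end.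
Lemma B4 s r : add8 s (add8 (neg8 s) r) = r.
Proof. apply/val_inj; c8 s; c8 r; vm_compute; reflexivity. Qed.
Lemma pp_lt (s : 'I_8) (k : 'I_4) : ((addn8 s (2 * k))./2 < 4)%N.
Proof. c8 s; c4 k; vm_compute; reflexivity. Qed.
Definition pp (s : 'I_8) (k : 'I_4) : 'I_4 := Ordinal (pp_lt s k).
Lemma B5 s k : add8 s (evi' k) = (if odd s then odi' (pp s k) else evi' (pp s k)).
Proof. c8 s; c4 k; apply/val_inj; vm_compute; reflexivity. Qed.
Lemma B6 s : injective (pp s).
Proof. move=> a b; c8 s; c4 a; c4 b; move/(congr1 val); vm_compute; try discriminate; move=> _; apply/val_inj; reflexivity. Qed.
Lemma B0 s : (-1 <= r1 s <= 2) && (-1 <= r2 s <= 2).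
Proof. c8 s; vm_compute; reflexivity. Qed.


Section Real.
Variable R : realType.

Lemma shiftE (i : 'I_8) : shift R i = ((r1 i)%:~R * (pi / 2), (r2 i)%:~R * (pi / 2)).
Proof. c8 i; rewrite /shift /r1 /r2 /=; congr pair; rewrite ?mul0r ?mul1r ?mulN1r //; lra. Qed.

Lemma perx_nat (f : R * R -> R[i]) (Hf : periodic2 f) x y (n : nat) :
  f (x + n%:R * (2 * pi), y) = f (x, y).
Proof.
elim: n x => [|n IH] x; first by rewrite mul0r addr0.
by rewrite mulrSr mulrDl mul1r addrA (proj1 (Hf _ _)) IH.
Qed.
Lemma pery_nat (f : R * R -> R[i]) (Hf : periodic2 f) x y (n : nat) :
  f (x, y + n%:R * (2 * pi)) = f (x, y).
Proof.
elim: n y => [|n IH] y; first by rewrite mul0r addr0.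
by rewrite mulrSr mulrDl mul1r addrA (proj2 (Hf _ _)) IH.
Qed.
Lemma per_int (f : R * R -> R[i]) (Hf : periodic2 f) x y (n m : int) :
  f (x + n%:~R * (2 * pi), y + m%:~R * (2 * pi)) = f (x, y).
Proof.
have hx : forall x y (n : int), f (x + n%:~R * (2 * pi), y) = f (x, y).
  move=> a b [k|k]; first by rewrite pmulrn perx_nat.
  rewrite NegzE intrN mulNr -[in RHS](subrK ((k.+1)%:R * (2 * pi)) a).
  by rewrite perx_nat.
have hy : forall x y (n : int), f (x, y + n%:~R * (2 * pi)) = f (x, y).
  move=> a b [k|k]; first by rewrite pmulrn pery_nat.
  rewrite NegzE intrN mulNr -[in RHS](subrK ((k.+1)%:R * (2 * pi)) b).
  by rewrite pery_nat.
by rewrite hx hy.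
Qed.

Lemma red (x : R) : -(3 * pi) <= x < 3 * pi -> exists t : int, -pi <= x + t%:~R * (2 * pi) < pi.
Proof.
have hp : 0 < pi :> R := pi_gt0 R.
move=> /andP[h1 h2].
case: (ltrP x (- pi)) => h3.
  exists 1; rewrite mul1r; apply/andP; split; lra.
case: (ltrP x pi) => h4.
  exists 0; rewrite mul0r addr0; apply/andP; split; lra.
exists (-1); rewrite mulN1r; apply/andP; split; lra.
Qed.

Lemma mem4 (z : int) : z \in [:: -4; 0; 4] -> exists e : int, z = e * 4.
Proof. rewrite !inE => /or3P[] /eqP->; by [exists (-1) | exists 0 | exists 1]. Qed.

Lemma rbound (r : int) (y : R) : -1 <= r <= 2 -> -pi <= y < pi ->
   -(3 * pi) <= y + r%:~R * (pi / 2) < 3 * pi.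
Proof.
have hp : 0 < pi :> R := pi_gt0 R.
move=> /andP[h1 h2] /andP[h3 h4].
have g1 : -1 <= r%:~R :> R by rewrite -(ler_int R) in h1.
have g2 : r%:~R <= 2 :> R by rewrite -(ler_int R) in h2.
apply/andP; split; nra.
Qed.

Lemma shiftpt (w : R * R) (s : 'I_8) : inS0 w -> exists w', inS0 w' /\
  forall f : R * R -> R[i], periodic2 f -> forall i,
    f (padd w' (shift R i)) = f (padd w (shift R (add8 s i))).
Proof.
case=> hw1 hw2; case/andP: (B0 s) => hb1 hb2.
have [t1 ht1] := red (rbound hb1 hw1).
have [t2 ht2] := red (rbound hb2 hw2).
exists (w.1 + (r1 s)%:~R * (pi / 2) + t1%:~R * (2 * pi),
        w.2 + (r2 s)%:~R * (pi / 2) + t2%:~R * (2 * pi)).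
split; first by split.
move=> f Hf i; rewrite !shiftE /padd /=.
have [e1 he1] := mem4 (B1 s i).
have [e2 he2] := mem4 (B1' s i).
rewrite -[RHS](per_int Hf _ _ (e1 + t1) (e2 + t2)); congr f; congr pair.
  have h : (r1 s)%:~R + (r1 i)%:~R - (r1 (add8 s i))%:~R = e1%:~R * 4 :> R.
    by rewrite -intrN -!intrD he1 intrM.
  have -> : (r1 s)%:~R = (r1 (add8 s i))%:~R - (r1 i)%:~R + e1%:~R * 4 :> R.
    by rewrite -h; ring.
  by rewrite intrD; field.
have h : (r2 s)%:~R + (r2 i)%:~R - (r2 (add8 s i))%:~R = e2%:~R * 4 :> R.
  by rewrite -intrN -!intrD he2 intrM.
have -> : (r2 s)%:~R = (r2 (add8 s i))%:~R - (r2 i)%:~R + e2%:~R * 4 :> R.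
  by rewrite -h; ring.
by rewrite intrD; field.
Qed.
End Real.


Lemma half_lt (i : 'I_8) : (i./2 < 4)%N. Proof. by c8 i. Qed.
Definition h8 (i : 'I_8) : 'I_4 := Ordinal (half_lt i).
Lemma split8 (i : 'I_8) : i = (if odd i then odi (h8 i) else evi (h8 i)).
Proof. rewrite eviE odiE; apply/val_inj; c8 i; vm_compute; reflexivity. Qed.

Section LA.
Variable F : fieldType.

Lemma sum_split8 (g : 'I_8 -> F) :
  \sum_(i < 8) g i = \sum_(k < 4) g (evi k) + \sum_(k < 4) g (odi k).
Proof.
rewrite (bigID (fun i : 'I_8 => odd i)) /= addrC.
congr (_ + _).
  rewrite (reindex_onto (fun k => evi k) h8); last first.
    by move=> i /negbTE hi; rewrite [RHS]split8 hi.
  by apply: eq_bigl => k; rewrite eviE; c4 k; vm_compute.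
rewrite (reindex_onto (fun k => odi k) h8); last first.
  by move=> i hi; rewrite [RHS]split8 hi.
by apply: eq_bigl => k; rewrite odiE; c4 k; vm_compute.
Qed.

Definition Eof (N : 'M[F]_(8,6)) : 'M[F]_(4,6) := \matrix_(k, j) N (evi k) j.
Definition Oof (N : 'M[F]_(8,6)) : 'M[F]_(4,6) := \matrix_(k, j) N (odi k) j.

Lemma N_sub (N : 'M[F]_(8,6)) : (N <= Eof N + Oof N)%MS.
Proof.
apply/row_subP => i; rewrite (split8 i); case: (odd i).
  apply: submx_trans (addsmxSr _ _).
  have -> : row (odi (h8 i)) N = row (h8 i) (Oof N) by apply/rowP => j; rewrite !mxE.
  exact: row_sub.
apply: submx_trans (addsmxSl _ _).
have -> : row (evi (h8 i)) N = row (h8 i) (Eof N) by apply/rowP => j; rewrite !mxE.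
exact: row_sub.
Qed.

Lemma L_rank (N : 'M[F]_(8,6)) : (\rank N <= \rank (Eof N) + \rank (Oof N))%N.
Proof.
apply: leq_trans (mxrankS (N_sub N)) _.
by rewrite -mxrank_sum_cap leq_addr.
Qed.
End LA.


Section LA.
Variable F : fieldType.

Lemma LA1 (N : 'M[F]_(8,6)) (u : 'rV_4) (b : 'cV_8) :
  \rank N = 6%N -> \rank (Eof N) = 3%N -> \rank (Oof N) = 3%N -> u != 0 ->
  u *m Eof N = 0 ->
  (forall k, b (odi k) 0 = 0) -> \sum_k u 0 k * b (evi k) 0 = 0 ->
  exists x, N *m x = b.
Proof.
move=> rN rE rO u0 uE bo bs.
suff: (b^T <= N^T)%MS.
  by case/submxP => D hD; exists D^T; rewrite -(trmxK N) -trmx_mul -hD trmxK.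
rewrite submxE; apply/eqP/matrixP => i j; rewrite !mxE.
set c := col j (cokermx N^T).
have hc : N^T *m c = 0.
  apply/matrixP => a z; transitivity ((N^T *m cokermx N^T) a j); last by rewrite mulmx_coker !mxE.
  by rewrite !mxE; apply: eq_bigr => l _; rewrite !mxE ?(ord1 z).
set y := c^T.
have hy : y *m N = 0 by rewrite /y -[N]trmxK -trmx_mul hc trmx0.
set ye : 'rV_4 := \row_k y 0 (evi k).
set yo : 'rV_4 := \row_k y 0 (odi k).
have hsp : ye *m Eof N = - (yo *m Oof N).
  apply/eqP; rewrite -addr_eq0; apply/eqP.
  rewrite -hy; apply/matrixP => a k; rewrite !mxE sum_split8.
  by congr (_ + _); apply: eq_bigr => l _; rewrite !mxE ?(ord1 a).
have cap0 : (Eof N :&: Oof N)%MS = 0.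
  apply/eqP; rewrite -mxrank_eq0.
  have h1 := mxrank_sum_cap (Eof N) (Oof N).
  have h2 := mxrankS (N_sub N).
  have h3 : (\rank (Eof N + Oof N)%MS <= 6)%N by apply: rank_leq_col.
  rewrite rE rO rN in h1 h2 *; apply/eqP; lia.
have yeE : ye *m Eof N = 0.
  apply/eqP; rewrite -submx0 -cap0 sub_capmx submxMl hsp -mulNmx submxMl //.
have kE : \rank (kermx (Eof N)) = 1%N by rewrite mxrank_ker rE.
have uk : (u <= kermx (Eof N))%MS by rewrite sub_kermx uE.
have yk : (ye <= kermx (Eof N))%MS by rewrite sub_kermx yeE.
have eqk : (u == kermx (Eof N))%MS.
  by rewrite -(mxrank_leqif_eq uk).2 kE rank_rV u0.
have : (ye <= u)%MS by apply: submx_trans yk _; case/andP: eqk.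
case/submxP => D hD.
transitivity (\sum_(m < 8) b m 0 * c m 0).
  by apply: eq_bigr => m _; rewrite /c !mxE (ord1 i).
rewrite (sum_split8 (fun m => b m 0 * c m 0)).
rewrite [X in _ + X]big1 ?addr0; last by move=> k _; rewrite bo mul0r.
transitivity (D 0 0 * \sum_k u 0 k * b (evi k) 0); last by rewrite bs mulr0.
rewrite mulr_sumr; apply: eq_bigr => k _.
have : ye 0 k = (D *m u) 0 k by rewrite hD.
rewrite !mxE big_ord1 => h; by rewrite mulrA -h mulrC.
Qed.
End LA.


Section LA.
Variable F : fieldType.

Definition Gm : 'M[F]_(3,4) := \matrix_(i, k) ((k == lift ord0 i)%:R - (k == ord0)%:R).
Definition Pm : 'M[F]_(4,3) := \matrix_(k, j) (k == lift ord0 j)%:R.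

Lemma GP : Gm *m Pm = 1%:M.
Proof.
apply/matrixP => i j; rewrite !mxE !big_ord_recr big_ord0 /= !mxE.
c3 i; c3 j; rewrite /=; ring.
Qed.

Lemma rankG : \rank Gm = 3%N.
Proof.
apply/eqP; rewrite eqn_leq rank_leq_row /=.
by rewrite -{1}(mxrank1 F 3) -GP mxrankM_maxl.
Qed.

Lemma G1 : Gm *m (const_mx 1 : 'cV[F]_4) = 0.
Proof.
apply/matrixP => i j; rewrite !mxE !big_ord_recr big_ord0 /= !mxE.
c3 i; rewrite /=; ring.
Qed.

Lemma half (E O : 'M[F]_(4,6)) (al : F) (c : 'cV_4) :
  (forall j : 'I_4, exists x, E *m x = \col_k ((k == j)%:R - al * c k 0) /\ O *m x = 0) ->
  (\rank O <= 3)%N /\ ((\rank E <= 3)%N -> (const_mx 1 : 'rV[F]_4) *m E = 0).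
Proof.
move=> H; have [X hX] := fin_all_exists H.
pose Xm : 'M_(3,6) := \matrix_(i, j) (X (lift ord0 i) - X ord0) j 0.
have hXE : Xm *m E^T = Gm.
  apply/matrixP => i k.
  transitivity ((E *m (X (lift ord0 i) - X ord0)) k 0).
    by rewrite !mxE; apply: eq_bigr => j _; rewrite !mxE mulrC.
  by rewrite mulmxBr !(proj1 (hX _)) !mxE; ring.
have hXO : Xm *m O^T = 0.
  apply/matrixP => i k.
  transitivity ((O *m (X (lift ord0 i) - X ord0)) k 0).
    by rewrite !mxE; apply: eq_bigr => j _; rewrite !mxE mulrC.
  by rewrite mulmxBr !(proj2 (hX _)) !mxE subrr.
have rX : \rank Xm = 3%N.
  apply/eqP; rewrite eqn_leq rank_leq_row /=.
  by rewrite -{1}rankG -hXE mxrankM_maxl.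
split.
  have : (Xm <= kermx O^T)%MS by rewrite sub_kermx hXO.
  move/mxrankS; rewrite mxrank_ker mxrank_tr rX; lia.
move=> rE.
have sGE : (Gm <= E^T)%MS by rewrite -hXE submxMl.
have h1 := mxrankS sGE; rewrite mxrank_tr rankG in h1.
have : (Gm == E^T)%MS.
  by rewrite -(mxrank_leqif_eq sGE).2 mxrank_tr rankG; apply/eqP; lia.
case/andP => _.
case/submxP => D hD.
apply: trmx_inj; rewrite trmx_mul hD trmx0 -mulmxA trmx_const.
by rewrite G1 mulmx0.
Qed.

Lemma LA2 (N : 'M[F]_(8,6)) (al be : F) (c d : 'cV_4) :
  \rank N = 6%N ->
  (forall j : 'I_4, exists x, Eof N *m x = \col_k ((k == j)%:R - al * c k 0) /\ Oof N *m x = 0) ->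
  (forall j : 'I_4, exists x, Oof N *m x = \col_k ((k == j)%:R - be * d k 0) /\ Eof N *m x = 0) ->
  [/\ \rank (Eof N) = 3%N, \rank (Oof N) = 3%N, (const_mx 1 : 'rV[F]_4) *m Eof N = 0 & (const_mx 1 : 'rV[F]_4) *m Oof N = 0].
Proof.
move=> rN H1 H2.
have [rO hE] := half H1.
have [rE hO] := half H2.
have := L_rank N; rewrite rN => h.
split; [lia | lia | exact: hE | exact: hO].
Qed.
End LA.


Lemma odd_evi k : odd (evi k) = false. Proof. rewrite eviE; c4 k; vm_compute; reflexivity. Qed.
Lemma odd_odi k : odd (odi k) = true. Proof. rewrite odiE; c4 k; vm_compute; reflexivity. Qed.
Lemma evi_eq k j : (evi k == evi j) = (k == j).
Proof. rewrite !eviE; c4 k; c4 j; vm_compute; reflexivity. Qed.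
Lemma odi_eq k j : (odi k == odi j) = (k == j).
Proof. rewrite !odiE; c4 k; c4 j; vm_compute; reflexivity. Qed.
Lemma odi_evi k j : (odi k == evi j) = false.
Proof. rewrite odiE eviE; c4 k; c4 j; vm_compute; reflexivity. Qed.
Lemma evi_odi k j : (evi k == odi j) = false.
Proof. rewrite odiE eviE; c4 k; c4 j; vm_compute; reflexivity. Qed.
Lemma evi0 : evi ord0 = ord0. Proof. by rewrite eviE; apply/val_inj. Qed.

Lemma odi_ne0 k : (val (odi k) == 0%N) = false.
Proof. rewrite odiE; c4 k; vm_compute; reflexivity. Qed.
Lemma evi_v0 k : (val (evi k) == 0%N) = (k == ord0).
Proof. rewrite eviE; c4 k; vm_compute; reflexivity. Qed.
Lemma EofE (F : fieldType) (N : 'M[F]_(8,6)) (x : 'cV[F]_6) k : (Eof N *m x) k 0 = (N *m x) (evi k) 0.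
Proof. by rewrite !mxE; apply: eq_bigr => j _; rewrite mxE. Qed.
Lemma OofE (F : fieldType) (N : 'M[F]_(8,6)) (x : 'cV[F]_6) k : (Oof N *m x) k 0 = (N *m x) (odi k) 0.
Proof. by rewrite !mxE; apply: eq_bigr => j _; rewrite mxE. Qed.

Section Main.
Variable R : realType.
Variables (m0 : R * R -> R[i]) (mt : 'I_7 -> R * R -> R[i]).
Hypothesis Hm0 : periodic2 m0.
Hypothesis Hmt : forall j, periodic2 (mt j).
Hypothesis Hyp : forall w, inS0 w ->
     \rank (Mhat0 mt w) = 6%N /\
     \sum_(k < 4) m0 w * (mt ord0 (padd w (shift R (evi k))))^* = 1.

Lemma padd0 (w : R * R) : padd w (shift R ord0) = w.
Proof. by case: w => a b; rewrite /padd /shift /= !addr0. Qed.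

Lemma b0'E w (i : 'I_8) : b0' m0 mt w i 0 =
  (if val i == 0%N then 1 else 0) - m0 w * (if odd i then 0 else (mt ord0 (padd w (shift R i)))^*).
Proof. by rewrite /b0' !mxE /=. Qed.

Lemma Mhat0E w (i : 'I_8) j : Mhat0 mt w i j = (mt (lift ord0 j) (padd w (shift R i)))^*.
Proof.
rewrite /Mhat0 /Mt !mxE.
by rewrite (_ : (\val (lift ord0 j) == 0%N) = false).
Qed.

Lemma C1 w s : inS0 w ->
  m0 (padd w (shift R s)) *
    \sum_(k < 4) (mt ord0 (padd w (shift R (if odd s then odi k else evi k))))^* = 1.
Proof.
move=> hw; have [w' [hw' hf]] := shiftpt s hw.
have [_ h] := Hyp hw'.
rewrite -mulr_sumr in h; rewrite -h.
have -> : m0 w' = m0 (padd w (shift R s)).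
  by rewrite -{1}(padd0 w') hf // (eqP (_ : add8 s ord0 == s)) // B3.
congr (_ * _).
under [RHS]eq_bigr => k _ do rewrite hf // eviE B5.
rewrite [LHS](reindex_inj (@B6 s)) /=.
by apply: eq_bigr => k _; case: (odd s); rewrite ?eviE ?odiE.
Qed.

Lemma C2 w s : inS0 w ->
  (forall w, inS0 w -> exists x : 'cV[R[i]]_6, Mhat0 mt w *m x = b0' m0 mt w) ->
  exists x : 'cV[R[i]]_6, forall r, (Mhat0 mt w *m x) r 0 = (r == s)%:R -
     (if odd r == odd s then m0 (padd w (shift R s)) * (mt ord0 (padd w (shift R r)))^* else 0).
Proof.
move=> hw Hx; have [w' [hw' hf]] := shiftpt s hw.
have [x hx] := Hx w' hw'.
exists x => r.
move: (B4 s r); set i := add8 (neg8 s) r => <-.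
transitivity ((Mhat0 mt w' *m x) i 0).
  by rewrite !mxE; apply: eq_bigr => j _; rewrite !Mhat0E hf.
rewrite hx b0'E.
have -> : m0 w' = m0 (padd w (shift R s)).
  by rewrite -{1}(padd0 w') hf // (eqP (_ : add8 s ord0 == s)) // B3.
rewrite B3 B2 hf //; congr (_ - _).
  by case: i => [[|n] ?].
by case: (odd s); case: (odd i); rewrite ?mulr0.
Qed.

Lemma aeq w k : inS0 w -> m0 (padd w (shift R (evi k))) = m0 w.
Proof.
move=> hw; have h1 := C1 (evi k) hw; rewrite odd_evi /= in h1.
have [_ h0] := Hyp hw; rewrite -mulr_sumr in h0.
have nz : \sum_(k < 4) (mt ord0 (padd w (shift R (evi k))))^* != 0.
  by apply/eqP => h; move: h0; rewrite h mulr0 => /eqP; rewrite eq_sym oner_eq0.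
by apply: (mulIf nz); rewrite h1 h0.
Qed.

Lemma aeq' w k : inS0 w -> m0 (padd w (shift R (odi k))) = m0 (padd w (shift R (odi ord0))).
Proof.
move=> hw; have h1 := C1 (odi k) hw; rewrite odd_odi /= in h1.
have h0 := C1 (odi ord0) hw; rewrite odd_odi /= in h0.
have nz : \sum_(k < 4) (mt ord0 (padd w (shift R (odi k))))^* != 0.
  by apply/eqP => h; move: h0; rewrite h mulr0 => /eqP; rewrite eq_sym oner_eq0.
by apply: (mulIf nz); rewrite h1 h0.
Qed.

Lemma main :
  ((forall w, inS0 w -> exists x : 'cV[R[i]]_6, Mhat0 mt w *m x = b0' m0 mt w)
   <->
   (forall w, inS0 w ->
      [/\ \rank (Modd mt w) = 3%N, \rank (Meven mt w) = 3%N,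
          m0even m0 w *m Meven mt w = 0
        & m0odd m0 w *m Modd mt w = 0])).
Proof.
split.
  move=> Hx w hw; have [rN _] := Hyp hw.
  pose c : 'cV_4 := \col_k (mt ord0 (padd w (shift R (evi k))))^*.
  pose d : 'cV_4 := \col_k (mt ord0 (padd w (shift R (odi k))))^*.
  have hE : forall j : 'I_4, exists x, Eof (Mhat0 mt w) *m x = \col_k ((k == j)%:R - m0 w * c k 0)
              /\ Oof (Mhat0 mt w) *m x = 0.
    move=> j; have [x hx] := C2 (evi j) hw Hx; exists x; split;
      apply/matrixP => k z; rewrite (ord1 z).
      by rewrite EofE hx !odd_evi evi_eq /= aeq // !mxE.
    by rewrite OofE hx odd_odi odd_evi odi_evi /= subr0 mxE.
  have hO : forall j : 'I_4, exists x, Oof (Mhat0 mt w) *m x =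
       \col_k ((k == j)%:R - m0 (padd w (shift R (odi ord0))) * d k 0)
              /\ Eof (Mhat0 mt w) *m x = 0.
    move=> j; have [x hx] := C2 (odi j) hw Hx; exists x; split;
      apply/matrixP => k z; rewrite (ord1 z).
      by rewrite OofE hx !odd_odi odi_eq /= aeq' // !mxE.
    by rewrite EofE hx odd_odi odd_evi evi_odi /= subr0 mxE.
  have [rE rO hE1 hO1] := LA2 rN hE hO.
  split => //.
    have -> : m0even m0 w = m0 w *: const_mx 1.
      by apply/matrixP => a k; rewrite !mxE aeq // mulr1.
    by rewrite -scalemxAl [_ *m Meven mt w]hE1 scaler0.
  have -> : m0odd m0 w = m0 (padd w (shift R (odi ord0))) *: const_mx 1.
    by apply/matrixP => a k; rewrite !mxE aeq' // mulr1.
  by rewrite -scalemxAl [_ *m Modd mt w]hO1 scaler0.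
move=> H w hw; have [rN hs] := Hyp hw; have [rO rE h1 h2] := H w hw.
apply: (@LA1 _ _ (m0even m0 w)) rN rE rO _ h1 _ _.
- apply/eqP => /matrixP/(_ 0 ord0); rewrite !mxE evi0 padd0 => h.
  by move: hs; rewrite -mulr_sumr h mul0r => /eqP; rewrite eq_sym oner_eq0.
- by move=> k; rewrite b0'E odd_odi mulr0 subr0 odi_ne0.
under eq_bigr => k _ do rewrite b0'E odd_evi evi_v0 !mxE aeq // mulrBr.
rewrite -mulr_sumr in hs; rewrite sumrB -!mulr_sumr hs (bigD1 ord0) //= big1 ?addr0 ?mulr1 ?subrr //.
by move=> k /negbTE ->.
Qed.
End Main.


Theorem proposition2 (R : realType) (m0 : R * R -> R[i])
    (mt : 'I_7 -> R * R -> R[i]) :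
  periodic2 m0 -> (forall j, periodic2 (mt j)) ->
  (forall w, inS0 w ->
     \rank (Mhat0 mt w) = 6%N /\
     \sum_(k < 4) m0 w * (mt ord0 (padd w (shift R (evi k))))^* = 1) ->
  ((forall w, inS0 w -> exists x : 'cV[R[i]]_6, Mhat0 mt w *m x = b0' m0 mt w)
   <->
   (forall w, inS0 w ->
      [/\ \rank (Modd mt w) = 3%N, \rank (Meven mt w) = 3%N,
          m0even m0 w *m Meven mt w = 0
        & m0odd m0 w *m Modd mt w = 0])).
Proof. by move=> Hm0 Hmt Hyp; apply: main. Qed.
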